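(* Let $p$ be a prime, $q$ a power of $p$, and $F$ a field of characteristic $p$ containing $\mathbb{F}_q$. Let $L\in F[x]$ be a monic $q$-polynomial of $q$-degree $n$ such that: (1) $L(x)/x$ is irreducible over $F$; (2) $L$ is not a $q^s$-polynomial for any integer $s>1$; (3) $L=x^{q^n}+a_{n-k}x^{q^{n-k}}+\cdots+a_0x$ with $1\leq k\leq n$ and $a_{n-k}\neq0$. Let $V$ be the space of roots of $L$ in a splitting field $E$ of $L$ over $F$, and let $\alpha,\beta\in V$ be linearly independent over $\mathbb{F}_q$. If $d$ is a positive integer such that $\alpha^d,\alpha^{d-1}\beta,\dots,\beta^d$ are linearly dependent over $F$, then $d\geq q^k+1$.
   Context: A $q$-polynomial of $q$-degree $n$ is $\sum_{i=0}^n a_ix^{q^i}$ with $a_n\neq0$; it is a $q^s$-polynomial if only exponents $q^j$ with $s\mid j$ occur. *)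

(* Defs.v *)
From HB Require Import structures.
From mathcomp Require Import all_boot all_order all_algebra all_field.
Set Implicit Arguments. Unset Strict Implicit. Unset Printing Implicit Defensive.
Import GRing.Theory.
Local Open Scope ring_scope.

Definition is_qpoly (R : nzRingType) (q : nat) (L : {poly R}) : Prop :=
  forall j : nat, L`_j != 0 -> exists i : nat, j = (q ^ i)%N.

Definition qpoly_of_qdeg (R : nzRingType) (q n : nat) (L : {poly R}) : Prop :=
  is_qpoly q L /\ size L = (q ^ n).+1.

Definition is_qs_poly (R : nzRingType) (q s : nat) (L : {poly R}) : Prop :=
  forall j : nat, L`_j != 0 -> exists i : nat, j = (q ^ i)%N /\ (s %| i)%N.

(* F contains the field F_q: X^q - X has q distinct roots in F. *)
Definition contains_Fq (F : fieldType) (q : nat) : Prop :=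
  exists s : seq F, [/\ uniq s, size s = q & all (fun a => a ^+ q == a) s].

(* a, b in E are linearly independent over F_q = {c in F | c^q = c}. *)
Definition Fq_lin_indep (F : fieldType) (E : fieldExtType F) (q : nat)
  (a b : E) : Prop :=
  forall c1 c2 : F, c1 ^+ q = c1 -> c2 ^+ q = c2 ->
    c1 *: a + c2 *: b = 0 -> c1 = 0 /\ c2 = 0.

(* Main.v *)
Require Import Defs.
From HB Require Import structures.
From mathcomp Require Import all_boot all_order all_algebra all_field.
From mathcomp Require Import ring zify.
From Stdlib Require Import Classical.
Import GRing.Theory.
Local Open Scope ring_scope.
Set Implicit Arguments. Unset Strict Implicit. Unset Printing Implicit Defensive.

Lemma pnat_pchar (R : nzRingType) p m : p \in [pchar R] -> [pchar R].-nat (p ^ m)%N.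
Proof.
move=> pc; rewrite (eq_pnat _ (pcharf_eq pc)) pnatX pnat_id ?orbT //.
exact: pcharf_prime pc.
Qed.

Lemma frobB (R : comNzRingType) p m (x y : R) : p \in [pchar R] ->
  (x - y) ^+ (p ^ m)%N = x ^+ (p ^ m)%N - y ^+ (p ^ m)%N.
Proof.
move=> pc; rewrite exprDn_pchar ?exprNn_pchar //; exact: pnat_pchar.
Qed.

Lemma frob_inj (R : fieldType) p m (x y : R) : p \in [pchar R] ->
  x ^+ (p ^ m)%N = y ^+ (p ^ m)%N -> x = y.
Proof.
move=> pc e; apply/eqP; rewrite -subr_eq0.
have := @frobB _ p m x y pc; rewrite e subrr => /eqP; rewrite expf_eq0 => /andP[_ ->] //.
Qed.

Lemma fix_sub (R : fieldType) p e (g : R) a b : p \in [pchar R] ->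
  g ^+ ((p ^ e) ^ a)%N = g -> g ^+ ((p ^ e) ^ b)%N = g -> (b <= a)%N ->
  g ^+ ((p ^ e) ^ (a - b))%N = g.
Proof.
move=> pc Ha Hb ba.
have : (g ^+ ((p ^ e) ^ (a - b))%N) ^+ (p ^ (e * b))%N = g ^+ (p ^ (e * b))%N.
  by rewrite -exprM -expnM -expnD -mulnDr subnK // expnM Ha expnM Hb.
exact: frob_inj.
Qed.

Lemma fix_mul (R : fieldType) p e (g : R) s t :
  g ^+ ((p ^ e) ^ s)%N = g -> g ^+ ((p ^ e) ^ (s * t))%N = g.
Proof.
move=> Hs; elim: t => [|t IH]; first by rewrite muln0 expn0 expr1.
by rewrite mulnS expnD exprM Hs IH.
Qed.

Lemma fix_dvd (R : fieldType) p e (g : R) s m : p \in [pchar R] ->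
  (0 < s)%N -> g ^+ ((p ^ e) ^ s)%N = g ->
  (forall r, (0 < r < s)%N -> g ^+ ((p ^ e) ^ r)%N <> g) ->
  g ^+ ((p ^ e) ^ m)%N = g -> (s %| m)%N.
Proof.
move=> pc s0 Hs Hmin Hm.
have H1 := @fix_mul R p e g s (m %/ s) Hs.
have H2 := fix_sub pc Hm H1.
have Hle : (s * (m %/ s) <= m)%N by rewrite {2}(divn_eq m s) mulnC leq_addr.
have Hr : (m - s * (m %/ s))%N = (m %% s)%N by rewrite {1}(divn_eq m s) mulnC [(_ * _ + _)%N]addnC addnK.
apply/eqP; case: (posnP (m %% s)) => [->//|r0].
by case: (Hmin (m %% s)%N); rewrite ?r0 ?ltn_pmod // -Hr H2.
Qed.

Lemma Fq_elem (F : fieldType) (E : fieldExtType F) (q : nat) (g : E) :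
  (1 < q)%N -> contains_Fq F q -> g ^+ q = g -> exists c : F, c ^+ q = c /\ g = c%:A.
Proof.
move=> q1 [s [us ss alls]] gq.
case: (boolP (g \in map (in_alg E) s)) => [/mapP[c cs ->]|gn].
  by exists c; split => //; move/allP: alls => /(_ c cs)/eqP.
exfalso.
pose P : {poly E} := 'X^q - 'X.
have szP : size P = q.+1.
  by rewrite /P size_polyDl size_polyXn // size_polyN size_polyX ltnS.
have P0 : P != 0 by rewrite -size_poly_eq0 szP.
have := @max_poly_roots _ P (g :: map (in_alg E) s) P0.
rewrite /= gn map_inj_uniq ?us; last exact: fmorph_inj.
rewrite size_map ss szP ltnn.
have -> : root P g by rewrite /root /P !hornerE gq subrr.
rewrite /=.
have -> : all (root P) (map (in_alg E) s).
  apply/allP => x /mapP[c cs ->]; move/allP: alls => /(_ c cs)/eqP cq.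
  by rewrite /root /P !hornerE -rmorphXn /= cq subrr.
by move/(_ isT isT).
Qed.

Lemma arith_final (a b c Q B d : nat) : (a + 1 = Q * B)%N -> (b + 1 <= Q)%N ->
  (c <= d)%N -> (a <= b * c)%N -> (2 <= B)%N -> (B + 1 <= d)%N.
Proof. move=> *; nia. Qed.

Theorem theorem7p9 (p e : nat) (F : fieldType) (L : {poly F}) (n k : nat)
  (E : fieldExtType F) (alpha beta : E) (d : nat) :
  prime p -> (0 < e)%N -> p \in [pchar F] -> contains_Fq F (p ^ e) ->
  L \is monic -> qpoly_of_qdeg (p ^ e) n L ->
  (* (1) L(x)/x is irreducible over F *)
  irreducible_poly (L %/ 'X) ->
  (* (2) L is not a q^s-polynomial for any s > 1 *)
  (forall s : nat, (1 < s)%N -> ~ is_qs_poly (p ^ e) s L) ->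
  (* (3) L = x^(q^n) + a_(n-k) x^(q^(n-k)) + ... + a_0 x with a_(n-k) != 0 *)
  (1 <= k <= n)%N ->
  L`_((p ^ e) ^ (n - k)) != 0 ->
  (forall i : nat, (n - k < i < n)%N -> L`_((p ^ e) ^ i) = 0) ->
  (* E is a splitting field of L over F *)
  splittingFieldFor 1%VS (map_poly (in_alg E) L) fullv ->
  root (map_poly (in_alg E) L) alpha -> root (map_poly (in_alg E) L) beta ->
  Fq_lin_indep (p ^ e) alpha beta ->
  (0 < d)%N ->
  ~~ free [seq alpha ^+ (d - i) * beta ^+ i | i <- iota 0 d.+1] ->
  ((p ^ e) ^ k + 1 <= d)%N.
Proof.
move=> pr e0 pcF hFq monL [qpL szL] irrP nqs /andP[k1 kn] ank0 hz _ rA rB indep d0 nfree.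
set q := (p ^ e)%N in hFq qpL szL nqs ank0 hz indep *.
have p1 : (1 < p)%N by exact: prime_gt1.
have q1 : (1 < q)%N.
  by rewrite /q -[X in (X < _)%N](expn0 p) ltn_exp2l.
have q0 : (0 < q)%N by apply: ltnW.
have pcE : p \in [pchar E] by rewrite (pchar_lalg E).
have a0 : alpha != 0.
  apply/eqP => a0; have [] := indep 1 0; rewrite ?expr1n ?expr0n ?scale1r ?scale0r ?a0 ?addr0 //.
    by rewrite eqn0Ngt q0.
  by move/eqP; rewrite oner_eq0.
have L0 : L`_0 = 0.
  apply/eqP; apply: contraT => /qpL[i] /esym /eqP; rewrite eqn0Ngt expn_gt0 q0 //.
pose P := L %/ 'X.
have eL : L = P * 'X.
  rewrite /P divpK //; have := dvdp_XsubCl L 0; rewrite subr0 => ->.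
  by rewrite /root horner_coef0 L0.
have P0 : P != 0 by apply: irredp_neq0.
have szP : size P = (q ^ n)%N by move: szL; rewrite eL size_mulX // => [[]].
have L1 : L`_1 != 0.
  rewrite eL coefMX /=; apply/negP => /eqP P00.
  have XP : 'X %| P by have := dvdp_XsubCl P 0; rewrite subr0 => ->; rewrite /root horner_coef0 P00.
  have := (irrP.2 'X); rewrite size_polyX => /(_ isT XP) /eqp_size.
  rewrite size_polyX szP => qn2.
  have n1 : n = 1%N.
    clear -qn2 q1 q0 k1 kn; move: qn2 kn; case: n => [|[|n']] // qn2 _.
    exfalso; rewrite !expnS in qn2; have : (0 < q ^ n')%N by rewrite expn_gt0 q0.
    nia.
  move: k1 kn ank0; rewrite n1 => k1 kn; have -> : k = 1%N by lia.
  by rewrite subnn expn0 eL coefMX /= P00 eqxx.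
pose g := beta / alpha.
have eB : beta = g * alpha by rewrite /g divfK.
clearbody g.
pose f (i : 'I_d.+1) := alpha ^+ (d - i) * beta ^+ i.
have eS : [seq alpha ^+ (d - i) * beta ^+ i | i <- iota 0 d.+1] = [tuple f i | i < d.+1] :> seq E.
  have -> : iota 0 d.+1 = map val (enum 'I_d.+1) by rewrite val_enum_ord.
  by rewrite -map_comp.
rewrite eS in nfree.
have [c [ic [hc cs]]] : exists c : 'I_d.+1 -> F, exists i, c i != 0 /\ \sum_(i < d.+1) c i *: [tuple f i | i < d.+1]`_i = 0.
  apply: NNPP => H; move/negP: nfree; apply; apply/freeP => c cs i.
  apply: NNPP => ci; apply: H; exists c, i; split => //; exact/eqP.
pose G : {poly E} := \poly_(j < d.+1) (c (inord j))%:A.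
have G0 : G != 0.
  apply/eqP => HG; have := congr1 (fun P : {poly E} => P`_ic) HG; rewrite /= coef_poly ltn_ord inord_val coef0.
  by move/eqP; rewrite scaler_eq0 oner_eq0 orbF (negPf hc).
have Gg : root G g.
  have : G.[g] * alpha ^+ d = 0.
    rewrite horner_poly mulr_suml -[RHS]cs; apply: eq_bigr => i _.
    rewrite inord_val -tnth_nth tnth_mktuple /f eB -mulr_algl.
    have -> : alpha ^+ d = alpha ^+ (d - i) * alpha ^+ i by rewrite -exprD subnK // -ltnS.
    rewrite exprMn.
    set A := alpha ^+ (d - i); set B := alpha ^+ i; set C := g ^+ i.
    by rewrite -mulrA !mulr_algl mulrCA.
  by move/eqP; rewrite mulf_eq0 expf_eq0 (negPf a0) andbF orbF.
have dg : (adjoin_degree 1%VS g <= d)%N.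
  have : minPoly 1%VS g %| G.
    apply: minPoly_dvdp => //; apply/polyOver_poly => j _.
    by rewrite rpredZ // mem1v.
  move/(dvdp_leq G0); rewrite size_minPoly => H1.
  have H2 : (size G <= d.+1)%N by apply: size_poly.
  by rewrite -ltnS (leq_trans H1 H2).
have da : (adjoin_degree 1%VS alpha).+1 = (q ^ n)%N.
  pose PE := map_poly (in_alg E) P.
  have rPE : root PE alpha.
    move: rA; rewrite eL rmorphM /= map_polyX /root hornerMX mulf_eq0 (negPf a0) orbF.
    by [].
  have PE1 : PE \is a polyOver 1%VS by apply/polyOver1P; exists P.
  have /polyOver1P[g0 eg0] := minPolyOver 1%VS alpha.
  have : minPoly 1%VS alpha %| PE by apply: minPoly_dvdp.
  rewrite eg0 dvdp_map => g0P.
  have szg0 : size g0 = (adjoin_degree 1%VS alpha).+1.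
    by rewrite -size_minPoly eg0 size_map_poly.
  have : g0 %= P.
    apply: irrP.2 => //; rewrite szg0 eqSS -lt0n.
    by rewrite /adjoin_degree.
  by move/eqp_size; rewrite szg0 szP.
pose cc j := (L`_j)%:A * (g ^+ (q ^ n)%N - g ^+ j).
pose Q := (q ^ (n - k))%N.
have QN : (Q <= q ^ n)%N by rewrite /Q leq_exp2l // leq_subr.
have szLE : size (map_poly (in_alg E) L) = (q ^ n).+1 by rewrite size_map_poly.
have hsum : \sum_(j < (q ^ n).+1) cc j * alpha ^+ j = 0.
  have : g ^+ (q ^ n)%N * (map_poly (in_alg E) L).[alpha] - (map_poly (in_alg E) L).[beta] = 0.
    by move/rootP: rA => ->; move/rootP: rB => ->; rewrite mulr0 subr0.
  rewrite !horner_coef szLE mulr_sumr -sumrB => H; rewrite -[RHS]H; apply: eq_bigr => j _.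
  rewrite coef_map /= /cc eB exprMn mulrBr mulrBl.
  by rewrite [_ * g ^+ (q ^ n)%N]mulrC -!mulrA.
have cz : forall j, (Q < j)%N -> cc j = 0.
  move=> j Qj; rewrite /cc; case: (eqVneq (L`_j) 0) => [->|Lj]; first by rewrite scale0r mul0r.
  have [i ji] := qpL j Lj.
  have jN : (j < (q ^ n).+1)%N by rewrite -szL ltnNge; apply: contra Lj => Hj; rewrite nth_default.
  have iN : (i <= n)%N by rewrite -(leq_exp2l _ _ q1) -ltnS -ji.
  have iQ : (n - k < i)%N by rewrite -(ltn_exp2l _ _ q1) -ji.
  case: (ltnP i n) => [iN'|ni].
    by move: Lj; rewrite ji hz ?iQ ?iN' ?eqxx.
  have -> : j = (q ^ n)%N by rewrite ji; congr (_ ^ _)%N; apply/eqP; rewrite eqn_leq iN ni.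
  by rewrite subrr mulr0.
pose Cp : {poly E} := \poly_(j < (q ^ n).+1) cc j.
pose M : {poly E} := \poly_(j < Q) cc j.+1.
have eCM : Cp = M * 'X.
  apply/polyP => j; rewrite coefMX !coef_poly.
  case: j => [|j] /=; first by rewrite /cc L0 scale0r mul0r.
  case: (ltnP j Q) => jQ.
    by rewrite (leq_ltn_trans jQ) // ltnS.
  by rewrite cz //; case: ifP.
have Cp0 : Cp.[alpha] = 0 by rewrite horner_poly.
have Ma : M.[alpha] = 0.
  by move: Cp0; rewrite eCM hornerMX => /eqP; rewrite mulf_eq0 (negPf a0) orbF => /eqP.
case: (eqVneq M 0) => [M0|Mn0]; last first.
  pose K : {subfield E} := <<1%VS; g>>%AS.
  have gK : g \in K by apply: memv_adjoin.
  have MK : M \is a polyOver K.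
    apply/polyOver_poly => j _.
    by rewrite /cc rpredM ?rpredB ?rpredX // ?rpredZ ?mem1v.
  have dK : ((adjoin_degree K alpha) + 1 <= Q)%N.
    have := dvdp_leq Mn0 (minPoly_dvdp MK (introT rootP Ma)).
    rewrite size_minPoly addn1 => H1; apply: leq_trans H1 _; exact: size_poly.
  have dims : (adjoin_degree 1%VS alpha <= adjoin_degree K alpha * adjoin_degree 1%VS g)%N.
    have := dimvS (adjoinSl alpha (sub1v K)).
    rewrite (dim_Fadjoin 1%AS) (dim_Fadjoin K) /= dimv1 muln1.
    have -> : \dim K = adjoin_degree 1%VS g by rewrite /K /= (dim_Fadjoin 1%AS) dimv1 muln1.
    by [].
  apply: (arith_final _ dK dg dims).
    by rewrite addn1 da /Q -expnD subnK.
  apply: leq_trans q1 _; rewrite -{1}(expn1 q); exact: leq_pexp2l q0 k1.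
have jNg : forall j, L`_j != 0 -> (j < (q ^ n).+1)%N.
  by move=> j Lj; rewrite -szL ltnNge; apply: contra Lj => Hj; rewrite nth_default.
have call : forall j, L`_j != 0 -> g ^+ (q ^ n)%N = g ^+ j.
  move=> j Lj; have : Cp`_j = 0 by rewrite eCM M0 mul0r coef0.
  rewrite coef_poly jNg // /cc => /eqP; rewrite mulf_eq0 scaler_eq0 oner_eq0 orbF (negPf Lj) /=.
  by rewrite subr_eq0 => /eqP.
have Sn : g ^+ (q ^ n)%N = g by rewrite (call 1%N L1) expr1.
have exS : exists m, (0 < m)%N && (g ^+ (q ^ m)%N == g).
  by exists n; rewrite (leq_trans k1 kn) Sn eqxx.
case: (ex_minnP exS) => s /andP[s0 /eqP Ss] smin.
have sdvd : forall m, g ^+ (q ^ m)%N = g -> (s %| m)%N.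
  move=> m Sm; apply: (fix_dvd pcE s0 Ss _ Sm) => r /andP[r0 rs] Sr.
  have := smin r; rewrite r0 Sr eqxx => /(_ isT); by rewrite leqNgt rs.
have qs : is_qs_poly q s L.
  move=> j Lj; have [i ji] := qpL j Lj; exists i; split => //.
  have iN : (i <= n)%N by rewrite -(leq_exp2l _ _ q1) -ltnS -ji jNg.
  have e1 : g ^+ (q ^ n)%N = g ^+ (q ^ i)%N by rewrite -ji; apply: call.
  have Sni : g ^+ (q ^ (n - i))%N = g.
    apply: (@frob_inj _ p (e * i)) => //.
    by rewrite -exprM -expnM -expnD -mulnDr subnK // expnM e1 expnM.
  have := dvdn_sub (sdvd _ Sn) (sdvd _ Sni); by rewrite subKn.
have s1 : s = 1%N.
  case: (ltngtP s 1) => // [s_lt|s_gt]; first by move: s_lt; rewrite ltnNge s0.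
  by case: (nqs s s_gt).
move: Ss; rewrite s1 expn1 => Sq.
have [c0 [c0q gc0]] := Fq_elem q1 hFq Sq.
have m1q : (-1 : F) ^+ q = -1.
  rewrite exprNn_pchar ?expr1n //; exact: pnat_pchar.
have H0 : c0 *: alpha + (-1) *: beta = 0.
  by rewrite eB gc0 mulr_algl scaleN1r subrr.
have [_ h] := indep c0 (-1) c0q m1q H0.
by move/eqP: h; rewrite oppr_eq0 oner_eq0.
Qed.
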